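(* Let $n=p_1p_2\cdots p_r$, where $r\geq 3$ and $p_1<p_2<\cdots<p_r$ are prime numbers. Then $$\delta(\mathcal{P}(C_n))=\min\{\deg(p_{r-1}p_r),\ \deg(p_r)\}.$$ Further, $\delta(\mathcal{P}(C_n))=\deg(p_r)$ if and only if $$\phi(p_r)\geq\left(\frac{p_1p_2\cdots p_{r-2}}{\phi(p_1p_2\cdots p_{r-2})}-1\right)\phi(p_{r-1}).$$ In particular, if $\phi(p_r)\geq (r-2)\phi(p_{r-1})$, then $\delta(\mathcal{P}(C_n))=\deg(p_r)$.
   Context: For a finite group $G$, the power graph $\mathcal{P}(G)$ is the simple undirected graph with vertex set $G$ in which two distinct vertices are adjacent if one is an integral power of the other. $C_n$ denotes the cyclic group of order $n$, identified with $\mathbb{Z}_n=\{0,1,\ldots,n-1\}$ (addition mod $n$), so a positive divisor $d$ of $n$ with $d<n$ is regarded as the element $d\in\mathbb{Z}_n$. $\deg(a)$ is the degree of the vertex $a$ in $\mathcal{P}(C_n)$, $\delta(\Gamma)$ is the minimum degree of a graph $\Gamma$, and $\phi$ is Euler's totient function. *)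

(* Defs.v *)
From HB Require Import structures.
From mathcomp Require Import all_boot all_order all_algebra all_fingroup.
Set Implicit Arguments. Unset Strict Implicit. Unset Printing Implicit Defensive.

Local Open Scope group_scope.

(* Power graph of a finite group: distinct x, y adjacent iff one is an
   integral power of the other, i.e. x \in <[y]> or y \in <[x]>. *)
Definition pg_adj (gT : finGroupType) (x y : gT) : bool :=
  (x != y) && ((x \in <[y]>) || (y \in <[x]>)).

Definition pg_deg (gT : finGroupType) (x : gT) : nat :=
  #|[set y : gT | pg_adj x y]|.

(* minimum degree of the power graph (initial value #|gT| exceeds every degree) *)
Definition pg_mindeg (gT : finGroupType) : nat :=
  \big[minn/#|gT|]_(x : gT) pg_deg x.

(* Main.v *)
Require Import Defs.
From HB Require Import structures.
From mathcomp Require Import all_boot all_order all_algebra all_fingroup.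
From mathcomp Require Import zify ring.
Set Implicit Arguments. Unset Strict Implicit. Unset Printing Implicit Defensive.
Lemma sum_count (P : pred nat) s : (\sum_(i <- s) (P i : nat) = count P s)%N.
Proof. by elim: s => [|a s IH]; rewrite ?big_nil ?big_cons //= IH. Qed.

Lemma count_periodic (P : pred nat) t c :
  (forall y, P (y + t) = P y) -> count P (iota 0 (c * t)) = (c * count P (iota 0 t))%N.
Proof.
move=> hP.
have hP' : forall c y, P (c * t + y) = P y.
  elim=> [|c' IH] y; first by rewrite mul0n add0n.
  by rewrite mulSn (addnC t) -addnA (addnC t) addnA hP IH.
elim: c => [|c IH]; first by rewrite !mul0n.
rewrite mulSn addnC iotaD count_cat IH add0n.
rewrite -{1}[(c * t)%N]addn0 iotaDl count_map.
rewrite (@eq_count _ _ P); first by rewrite mulSn addnC.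
by move=> y /=; rewrite hP'.
Qed.

Lemma filter_mult g d : (0 < g)%N ->
  filter (fun y => g %| y) (iota 0 (g * d)) = map (fun t => t * g)%N (iota 0 d).
Proof.
move=> g0; elim: d => [|d IH]; first by rewrite muln0.
rewrite mulnS addnC iotaD filter_cat IH add0n -addn1 iotaD map_cat /= add0n.
congr (_ ++ _).
case: g g0 {IH} => // g' _.
rewrite /= dvdn_mulr //= mulnC; congr (_ :: _).
apply/eqP; rewrite -[_ == _]negbK -has_filter; apply/hasPn => z.
rewrite mem_iota => /andP [h1 h2]; apply/negP => /dvdnP [q hq]; subst z.
rewrite ltn_pmul2r // in h1.
have : (q * g'.+1 < d.+1 * g'.+1)%N by rewrite mulSn; lia.
rewrite ltn_pmul2r //; lia.
Qed.
Lemma card_count n (P : pred nat) : #|[set y : 'I_n | P (val y)]| = count P (iota 0 n).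
Proof.
rewrite cardsE cardE -(val_enum_ord n) count_map.
by rewrite /enum_mem size_filter filter_predT.
Qed.

Lemma gcd_dvd_coprime y g d : coprime g d -> (gcdn y (g * d) %| g) = coprime y d.
Proof.
move=> cgd; apply/idP/idP => h.
  rewrite /coprime -dvdn1; move: cgd; rewrite /coprime => /eqP <-.
  rewrite dvdn_gcd (dvdn_trans _ h) ?dvdn_gcdr //.
  by rewrite dvdn_gcd dvdn_gcdl (dvdn_trans (dvdn_gcdr y d)) // dvdn_mull.
have : coprime (gcdn y (g * d)) d by apply: coprime_dvdl h; apply: dvdn_gcdl.
by move/Gauss_dvdl => <-; apply: dvdn_gcdr.
Qed.

Lemma count_C1 g d : coprime g d -> (0 < g)%N ->
  count (fun z => coprime z d) (iota 0 (g * d)) = (g * totient d)%N.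
Proof.
move=> cgd g0.
rewrite count_periodic; last by move=> y; rewrite -coprime_modl modnDr coprime_modl.
rewrite totient_count_coprime sum_count; congr (_ * _)%N.
rewrite /index_iota subn0; apply: eq_count => z; by rewrite /= coprime_sym.
Qed.

Lemma count_C2 g d : (0 < g)%N -> count (fun z => g %| z) (iota 0 (g * d)) = d.
Proof. by move=> g0; rewrite -size_filter filter_mult // size_map size_iota. Qed.

Lemma count_C3 g d : coprime g d -> (0 < g)%N ->
  count (fun z => coprime z d && (g %| z)) (iota 0 (g * d)) = totient d.
Proof.
move=> cgd g0.
rewrite -(count_filter (fun z => coprime z d)) filter_mult // count_map.
rewrite totient_count_coprime sum_count /index_iota subn0.
by apply: eq_count => z; rewrite /= coprimeMl cgd andbT coprime_sym.
Qed.

Lemma count_drop1 (R : pred nat) x s : 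
  (count (fun z => (z != x) && R z) s + count (pred1 x) s * R x = count R s)%N.
Proof.
elim: s => [|a s IH] //=.
case: eqP => [->|_] /=; rewrite -IH; case: (R x); case: (R a) => /=; lia.
Qed.

Open Scope group_scope.
Lemma Zn_cycle k (x y : 'Z_k.+2) : (x \in <[y]>) = (gcdn y k.+2 %| x)%N.
Proof.
set n := k.+2; set g := gcdn y n.
apply/cycleP/idP.
  case=> i ->; rewrite Zp_expg /= -/n.
  rewrite -(dvdn_addl _ (dvdn_mull ((y * i) %/ n) (dvdn_gcdr y n))).
  by rewrite addnC -divn_eq dvdn_mulr // dvdn_gcdl.
move=> /dvdnP [t xt].
have [a _ /dvdnP [c hc]] := Bezoutr y (isT : (0 < n)%N).
exists (a * t * (n - 1))%N; apply: val_inj; rewrite Zp_expg /= -/n.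
have xn : (x < n)%N by [].
transitivity (x %% n)%N; first by rewrite modn_small.
apply/eqP; rewrite eq_sym.
rewrite -(eqn_modDr (g * t * (n - 1))).
have e1 : (y * (a * t * (n - 1)) + g * t * (n - 1) = (c * t * (n-1)) * n)%N.
  rewrite -/g in hc.
  have -> : (y * (a * t * (n - 1)) + g * t * (n - 1) = (g + a * y) * (t * (n-1)))%N by ring.
  rewrite hc; ring.
have e2 : (x + g * t * (n - 1) = (g * t) * n)%N.
  rewrite xt; have : (1 <= n)%N by []. case: (n) => // n' _. rewrite subn1 /=. lia.
by rewrite e1 e2 !modnMl.
Qed.

Lemma deg_Zn k (x : 'Z_k.+2) g d : g = gcdn x k.+2 -> (g * d = k.+2)%N -> coprime g d ->
  pg_deg x = (g * totient d + d - totient d).-1.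
Proof.
move=> hg hgd cgd.
have g0 : (0 < g)%N by rewrite hg gcdn_gt0 orbT.
rewrite /pg_deg (_ : [set y | pg_adj x y] =
   [set y : 'Z_k.+2 | (fun z => (z != val x) && (coprime z d || (g %| z))) (val y)]).
  transitivity (count (fun z => (z != val x) && (coprime z d || (g %| z))) (iota 0 k.+2)); first exact: card_count.
  have h1 := count_drop1 (fun z => coprime z d || (g %| z)) (val x) (iota 0 k.+2).
  have xn : (val x < k.+2)%N by exact: ltn_ord.
  have gx : (g %| val x)%N by rewrite hg dvdn_gcdl.
  rewrite (count_uniq_mem _ (iota_uniq 0 k.+2)) mem_iota leq0n add0n xn andTb gx orbT mul1n in h1.
  have hu := count_predUI (fun z => coprime z d) (fun z => g %| z) (iota 0 (g*d)).
  rewrite count_C1 // count_C2 // in hu.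
  rewrite (@eq_count _ (predI _ _) (fun z => coprime z d && (g %| z))) // count_C3 // in hu.
  rewrite (@eq_count _ (predU _ _) (fun z => coprime z d || (g %| z))) // hgd in hu.
  lia.
apply/setP => y; rewrite !inE /pg_adj !Zn_cycle -hg eq_sym.
have -> : (gcdn y k.+2 %| x)%N = (gcdn y k.+2 %| g)%N by rewrite hg dvdn_gcd dvdn_gcdr andbT.
by have := gcd_dvd_coprime (val y) cgd; rewrite hgd => ->.
Qed.
Close Scope group_scope.
Definition goodp r (p : nat -> nat) :=
  (forall i, i < r -> prime (p i)) /\ (forall i, i.+1 < r -> p i < p i.+1).

Lemma gp_mono r p : goodp r p -> forall i j, i < j -> j < r -> p i < p j.
Proof.
move=> [_ hi] i; elim=> [//|j IH] hij hj.
have := hi j hj; rewrite leq_eqVlt in hij; case/orP: hij => [/eqP [->] //|hij].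
by move=> h; apply: ltn_trans h; apply: IH => //; lia.
Qed.

Lemma gp_le r p : goodp r p -> forall i j, i <= j -> j < r -> p i <= p j.
Proof.
move=> hg i j; rewrite leq_eqVlt => /orP [/eqP -> //|hij] hj.
by apply: ltnW; apply: gp_mono hij hj.
Qed.

Lemma gp_inj r p : goodp r p -> forall i j, i < r -> j < r -> p i = p j -> i = j.
Proof.
move=> hg i j hi hj e; case: (ltngtP i j) => // h.
  by have := gp_mono hg h hj; rewrite e ltnn.
by have := gp_mono hg h hi; rewrite e ltnn.
Qed.

Lemma gp_ge r p : goodp r p -> forall i, i < r -> i.+2 <= p i.
Proof.
move=> hg; elim=> [|i IH] hi; first by apply: prime_gt1; apply: hg.1.
by have := IH (ltnW hi); have := hg.2 i hi; lia.
Qed.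

Lemma gp_pos r p : goodp r p -> forall i, i < r -> 0 < p i.
Proof. by move=> hg i hi; have := gp_ge hg hi; lia. Qed.

Lemma ndvd r p l i : goodp r p -> i < r -> all (fun j => (j < r) && (j != i)) l ->
  ~~ (p i %| \prod_(j <- l) p j).
Proof.
move=> hg hi; elim: l => [|a l IH] /=.
  by rewrite big_nil dvdn1; have := prime_gt1 (hg.1 i hi); lia.
move=> /andP [/andP [ha ai] hl]; rewrite big_cons Euclid_dvdM; last exact: hg.1.
rewrite (negbTE (IH hl)) orbF dvdn_prime2; try exact: hg.1.
apply/eqP => e; move/eqP: ai; apply; exact: (gp_inj hg ha hi (esym e)).
Qed.

Lemma tot_prod r p l : goodp r p -> uniq l -> all (fun j => j < r) l ->
  totient (\prod_(j <- l) p j) = \prod_(j <- l) (p j).-1.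
Proof.
move=> hg; elim: l => [|a l IH] /=; first by rewrite !big_nil.
move=> /andP [al ul] /andP [ha hl]; rewrite !big_cons totient_coprime.
  by rewrite IH // totient_prime //; exact: hg.1.
rewrite prime_coprime; last exact: hg.1.
apply: (ndvd hg ha); apply/allP => j jl; rewrite (allP hl) //=.
by apply/eqP => e; move: al; rewrite -e jl.
Qed.

Lemma div_prod r p l d : goodp r p -> uniq l -> all (fun j => j < r) l ->
  d %| \prod_(j <- l) p j -> d = \prod_(j <- [seq j <- l | p j %| d]) p j.
Proof.
move=> hg; elim: l d => [|a l IH] d /=.
  by rewrite !big_nil dvdn1 => _ _ /eqP.
move=> /andP [al ul] /andP [ha hl]; rewrite big_cons => hd.
have pa := hg.1 a ha.
case: ifP => hpd.
  move: hpd => /dvdnP [d' hd']; rewrite big_cons.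
  have d'div : d' %| \prod_(j <- l) p j.
    by rewrite -(@dvdn_pmul2l (p a)) ?prime_gt0 // mulnC -hd'.
  rewrite {1}hd' {1}(IH d' ul hl d'div) mulnC; congr (_ * _).
  congr (\prod_(j <- _) _); apply: eq_in_filter => j jl.
  rewrite hd' Euclid_dvdM; last exact: hg.1 (allP hl j jl).
  rewrite (dvdn_prime2 (hg.1 _ (allP hl j jl)) pa).
  suff -> : (p j == p a) = false by rewrite orbF.
  apply/eqP => e; move: al; rewrite -(gp_inj hg (allP hl j jl) ha e) jl //.
apply: IH => //.
rewrite -(@Gauss_dvdr d (p a)) // coprime_sym prime_coprime //; by rewrite hpd.
Qed.

Lemma prime_in_prod r p l q : goodp r p -> prime q -> all (fun j => j < r) l ->
  q %| \prod_(j <- l) p j -> exists2 j, j \in l & q = p j.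
Proof.
move=> hg hq; elim: l => [|a l IH] /=.
  by rewrite big_nil dvdn1 => _ /eqP e; move: hq; rewrite e.
move=> /andP [ha hl]; rewrite big_cons Euclid_dvdM // => /orP [h|h].
  by exists a; rewrite ?mem_head //; apply/eqP; rewrite -dvdn_prime2 //; exact: hg.1.
by have [j jl ->] := IH hl h; exists j => //; rewrite in_cons jl orbT.
Qed.

Lemma sqnd r p l j : goodp r p -> uniq l -> all (fun j => j < r) l -> j \in l ->
  ~~ (p j * p j %| \prod_(i <- l) p i).
Proof.
move=> hg ul hl jl.
have hj : j < r := allP hl j jl.
rewrite (perm_big _ (perm_to_rem jl)) big_cons dvdn_pmul2l ?(gp_pos hg hj) //.
apply: (ndvd hg hj); apply/allP => i; rewrite mem_rem_uniq // => /andP [ij il].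
by rewrite ij (allP hl i il).
Qed.

Lemma prod_pos r p l : goodp r p -> all (fun j => j < r) l -> 0 < \prod_(j <- l) p j.
Proof.
move=> hg hl; rewrite big_seq; apply: prodn_cond_gt0 => j jl.
apply: (gp_pos hg); exact: (allP hl j jl).
Qed.

Lemma sqf r p l g d : goodp r p -> uniq l -> all (fun j => j < r) l ->
  g * d = \prod_(j <- l) p j -> coprime g d.
Proof.
move=> hg ul hl e.
have n0 := prod_pos hg hl; rewrite -e muln_gt0 in n0.
case/andP: n0 => g0 d0.
rewrite /coprime; case: (ltngtP (gcdn g d) 1) => // h.
  by have := gcdn_gt0 g d; rewrite g0 => /esym; lia.
have hq := pdiv_prime h.
have qg : pdiv (gcdn g d) %| g := dvdn_trans (pdiv_dvd _) (dvdn_gcdl _ _).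
have qd : pdiv (gcdn g d) %| d := dvdn_trans (pdiv_dvd _) (dvdn_gcdr _ _).
have qn : pdiv (gcdn g d) %| \prod_(j <- l) p j by rewrite -e dvdn_mulr.
have [j jl ej] := prime_in_prod hg hq hl qn.
have := sqnd hg ul hl jl; rewrite -e -ej dvdn_mul //.
Qed.

Lemma LUV r p s k0 : goodp r p -> sorted ltn s -> all (fun i => (k0 <= i) && (i < r)) s ->
  let A := \prod_(i <- s) p i in let A1 := \prod_(i <- s) (p i).-1 in
  let B := \prod_(i <- iota k0 (size s)) p i in let B1 := \prod_(i <- iota k0 (size s)) (p i).-1 in
  [/\ B - B1 <= A - A1, B <= A, A1 <= A, B1 <= B & B1 * A <= A1 * B].
Proof.
move=> hg; elim: s k0 => [|i s IH] k0 /=; first by rewrite !big_nil.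
move=> hs /andP [/andP [ki ir] hall].
rewrite path_sortedE in hs; last exact: ltn_trans.
case/andP: hs => hi hs.
have hall' : all (fun j => (k0.+1 <= j) && (j < r)) s.
  apply/allP => j js; have := allP hi j js; have := allP hall j js => /= /andP [_ ->].
  by move=> ij; rewrite andbT; lia.
have [h1 h2 h3 h4 h5] := IH k0.+1 hs hall'.
rewrite !big_cons.
set A := \prod_(j <- s) p j in h1 h2 h3 h5 *.
set A1 := \prod_(j <- s) (p j).-1 in h1 h3 h5 *.
set B := \prod_(j <- iota k0.+1 (size s)) p j in h1 h2 h4 h5 *.
set B1 := \prod_(j <- iota k0.+1 (size s)) (p j).-1 in h1 h4 h5 *.
have xy : p k0 <= p i by apply: (gp_le hg).
have y2 : 2 <= p k0 by have := gp_ge hg (leq_ltn_trans ki ir); lia.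
set x := p i in xy *; set y := p k0 in xy y2 *.
split.
- nia.
- exact: leq_mul.
- by apply: leq_mul => //; lia.
- by apply: leq_mul => //; lia.
- have e : y.-1 * x <= x.-1 * y by nia.
  have := leq_mul e h5; rewrite -!mulnA; rewrite (mulnCA B1) (mulnCA A1); nia.
Qed.

Definition Dj (p : nat -> nat) j := \prod_(i <- iota 0 j) p i.
Definition Tj (p : nat -> nat) j := \prod_(i <- iota 0 j) (p i).-1.
Definition Gj r (p : nat -> nat) j := \prod_(i <- iota j (r - j)) p i.
Definition Fj r p j := (Gj r p j * Tj p j + Dj p j - Tj p j).-1.

Lemma DS p j : Dj p j.+1 = Dj p j * p j.
Proof. by rewrite /Dj -[j.+1]addn1 iotaD big_cat big_seq1. Qed.

Lemma TS p j : Tj p j.+1 = Tj p j * (p j).-1.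
Proof. by rewrite /Tj -[j.+1]addn1 iotaD big_cat big_seq1. Qed.

Lemma GS r p j : j < r -> Gj r p j = p j * Gj r p j.+1.
Proof. by move=> jr; rewrite /Gj (_ : r - j = (r - j.+1).+1) ?big_cons //; lia. Qed.

Lemma Gr r p : Gj r p r = 1.
Proof. by rewrite /Gj subnn big_nil. Qed.

Lemma DG r p j : j <= r -> Dj p j * Gj r p j = Dj p r.
Proof.
move=> jr; have e : iota 0 (j + (r - j)) = iota 0 j ++ iota j (r - j) by rewrite iotaD.
by rewrite (subnKC jr) in e; rewrite /Dj /Gj e big_cat.
Qed.

Lemma TD p j : Tj p j <= Dj p j.
Proof. by rewrite /Tj /Dj; apply: leq_prod => i _; apply: leq_pred. Qed.

Lemma Gpos r p j : goodp r p -> 0 < Gj r p j.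
Proof.
move=> hg; apply: (prod_pos hg); apply/allP => i; rewrite mem_iota; lia.
Qed.

Lemma Tpos r p j : goodp r p -> j <= r -> 0 < Tj p j.
Proof.
move=> hg; elim: j => [|j IH] jr; first by rewrite /Tj big_nil.
rewrite TS muln_gt0 IH ?(ltnW jr) //=; have := gp_ge hg jr; lia.
Qed.

Lemma Kbound r p j : goodp r p -> j <= r -> Dj p j <= j.+1 * Tj p j.
Proof.
move=> hg; elim: j => [|j IH] jr; first by rewrite /Dj /Tj !big_nil.
have IH' := IH (ltnW jr); have pj := gp_ge hg jr.
rewrite DS TS.
have : Dj p j * p j * j.+1 <= j.+2 * (Tj p j * (p j).-1) * j.+1.
  have e : p j * j.+1 <= j.+2 * (p j).-1 by nia.
  have := leq_mul IH' e; nia.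
by rewrite leq_pmul2r.
Qed.

Lemma chain_step r p j : goodp r p -> j.+3 <= r -> Fj r p j.+1 <= Fj r p j.
Proof.
move=> hg jr.
rewrite /Fj DS TS (@GS r p j); last lia.
have K := Kbound hg (ltnW (ltnW (ltnW jr))).
have TDj := TD p j.
have pj := gp_ge hg (ltnW (ltnW jr)).
have hl : j.+1 * (p j).-1 <= Gj r p j.+1.
  rewrite (@GS r p j.+1) ?(@GS r p j.+2); try lia.
  have := gp_ge hg (ltnW jr); have := gp_mono hg (ltnSn j.+1) jr.
  have h1 : j.+1 <= p j.+1 by have := gp_ge hg (ltnW jr); lia.
  have h2 : (p j).-1 <= p j.+2 * Gj r p j.+3.
    have := gp_mono hg ((_ : j < j.+2)) jr; have := Gpos j.+3 hg; nia.
  by move=> _ _; exact: leq_mul h1 h2.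
set d := Dj p j in K TDj *; set t := Tj p j in K TDj *; set l := Gj r p j.+1 in hl *.
set q := p j in pj hl *.
have h : d * q.-1 <= t * l.
  have := leq_mul K (leqnn q.-1); have := leq_mul (leqnn t) hl; nia.
have q1 : 1 <= q.-1 by lia.
have e : q = q.-1.+1 by lia.
rewrite {2 4}e; move: h q1 TDj; set q' := q.-1 => h q1 TDj.
have : l * (t * q') + d * q'.+1 - t * q' <= q'.+1 * l * t + d - t by nia.
lia.
Qed.

Lemma Fr r p : Fj r p r = (Dj p r).-1.
Proof. by rewrite /Fj Gr mul1n addnC addnK. Qed.

Lemma Flast r p : goodp r p -> 0 < r -> Fj r p r.-1 <= Fj r p r.
Proof.
move=> hg r0; rewrite Fr /Fj.
have e : r = r.-1.+1 by lia.
rewrite [in Dj p r]e DS (@GS r p r.-1) -?e ?Gr ?muln1; last lia.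
have h1 := TD p r.-1.
have h3 : r.-1 < r by lia.
have h2 := gp_ge hg h3.
have : p r.-1 * Tj p r.-1 + Dj p r.-1 - Tj p r.-1 <= Dj p r.-1 * p r.-1 by nia.
lia.
Qed.

Lemma Fdown r p : goodp r p -> forall k j, k + j = r.-2 -> Fj r p r.-2 <= Fj r p j.
Proof.
move=> hg; elim=> [|k IH] j e; first by rewrite -e.
apply: leq_trans (IH j.+1 _) (chain_step hg _); lia.
Qed.

Lemma Fchain r p j : goodp r p -> 3 <= r -> j <= r ->
  minn (Fj r p r.-2) (Fj r p r.-1) <= Fj r p j.
Proof.
move=> hg r3 jr.
case: (leqP j r.-2) => h.
  have hk : (r.-2 - j) + j = r.-2 by lia.
  exact: leq_trans (geq_minl _ _) (Fdown hg hk).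
apply: leq_trans (geq_minr _ _) _.
have [->|] : j = r.-1 \/ j = r by lia.
  by [].
move=> ->; apply: Flast hg _; lia.
Qed.

Lemma Fdiv r p g d : goodp r p -> 3 <= r -> g * d = Dj p r ->
  minn (Fj r p r.-2) (Fj r p r.-1) <= (g * totient d + d - totient d).-1.
Proof.
move=> hg r3 e.
have ul := iota_uniq 0 r.
have hl : all (fun j => j < r) (iota 0 r) by apply/allP => j; rewrite mem_iota.
have dn : d %| \prod_(j <- iota 0 r) p j by rewrite -/(Dj p r) -e dvdn_mull.
set s := [seq j <- iota 0 r | p j %| d].
have hd : d = \prod_(j <- s) p j := div_prod hg ul hl dn.
have us : uniq s by rewrite filter_uniq.
have hs : all (fun j => j < r) s by apply/allP => j; rewrite mem_filter mem_iota; lia.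
have htd : totient d = \prod_(j <- s) (p j).-1 by rewrite {1}hd (tot_prod hg us hs).
have ss : sorted ltn s by apply: sorted_filter; [exact: ltn_trans | exact: iota_ltn_sorted].
have hs0 : all (fun i => (0 <= i) && (i < r)) s.
  by apply/allP => i ins /=; rewrite (allP hs).
have [h1 h2 h3 h4 h5] := LUV hg ss hs0.
have jr : size s <= r by rewrite size_filter -[X in _ <= X](size_iota 0 r) count_size.
apply: leq_trans (Fchain hg r3 jr) _.
rewrite /Fj -/(Dj p (size s)) -/(Tj p (size s)) in h1 h2 h4 h5 *.
rewrite htd.
rewrite -hd in h1 h2 h3 h5.
set A1 := \prod_(j <- s) (p j).-1 in h1 h3 h5 *.
have DG' := DG p (jr).
set B := Dj p (size s) in h1 h2 h4 h5 DG' *.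
set B1 := Tj p (size s) in h1 h4 h5 *.
set G := Gj r p (size s) in DG' *.
have d0 : 0 < d.
  have := prod_pos hg hl; rewrite -/(Dj p r) -e muln_gt0; lia.
have key : G * B1 <= g * A1.
  rewrite -(leq_pmul2r d0).
  have : B1 * d * G <= A1 * B * G by rewrite leq_mul2r h5 orbT.
  have : g * d = B * G by rewrite e DG'.
  nia.
lia.
Qed.
Lemma big_minn_lb (T : finType) (f : T -> nat) c L :
  L <= c -> (forall x, L <= f x) -> L <= \big[minn/c]_(x : T) f x.
Proof.
move=> hc hf; apply: (big_ind (fun v => L <= v)) => //.
by move=> u v hu hv; rewrite leq_min hu hv.
Qed.

Lemma big_minn_ub (T : finType) (f : T -> nat) c a : \big[minn/c]_(x : T) f x <= f a.
Proof.
have : a \in index_enum T by rewrite mem_index_enum.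
elim: (index_enum T) => [//|b s IH]; rewrite in_cons big_cons.
case/orP => [/eqP ->|/IH h]; first exact: geq_minl.
exact: leq_trans (geq_minr _ _) h.
Qed.

Lemma Fj_tot r p j : goodp r p -> j <= r ->
  Fj r p j = (Gj r p j * totient (Dj p j) + Dj p j - totient (Dj p j)).-1.
Proof.
move=> hg jr; rewrite /Fj (tot_prod hg (iota_uniq 0 j)) //.
by apply/allP => i; rewrite mem_iota; lia.
Qed.

Lemma BA r p : goodp r p -> 3 <= r ->
  (Fj r p r.-1 <= Fj r p r.-2) =
  (Dj p r.-2 * (p r.-2).-1 <= Tj p r.-2 * ((p r.-1).-1 + (p r.-2).-1)).
Proof.
move=> hg r3.
have e : r.-1 = r.-2.+1 by lia.
rewrite /Fj e DS TS (@GS r p r.-2) ?(@GS r p r.-2.+1) -?e; try lia.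
have er : r.-1.+1 = r by lia.
rewrite er Gr muln1.
have t0 : 0 < Tj p r.-2 by apply: (Tpos hg); lia.
have td := TD p r.-2.
have h2 : r.-2 < r by lia.
have h1 : r.-1 < r by lia.
have hP : 2 <= p r.-2 by have := gp_ge hg h2; lia.
have hQ : 2 <= p r.-1 by have := gp_ge hg h1; lia.
move: t0 td hP hQ; generalize (Dj p r.-2) (Tj p r.-2) (p r.-2) (p r.-1).
move=> m t [|[|P]] [|[|Q]] //= t0 tm _ _.
apply/idP/idP => h; nia.
Qed.

Lemma rat_equiv (a b mm t : nat) : 0 < t ->
  ((a%:R >= (mm%:R / t%:R - 1) * b%:R :> rat)%R) = (mm * b <= t * (a + b)).
Proof.
move=> t0.
have tR : (0 < t%:R :> rat)%R by rewrite Num.Theory.ltr0n.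
rewrite GRing.mulrBl GRing.mul1r Num.Theory.lerBlDr GRing.mulrAC Num.Theory.ler_pdivrMr //.
by rewrite -GRing.natrM -GRing.natrD -GRing.natrM Num.Theory.ler_nat (mulnC t).
Qed.

Theorem theorem1p2 (r : nat) (p : nat -> nat) (n : nat) :
  3 <= r ->
  (forall i, i < r -> prime (p i)) ->
  (forall i, i.+1 < r -> p i < p i.+1) ->
  n = \prod_(i < r) p i ->
  let m := \prod_(i < r.-2) p i in
  [/\ pg_mindeg 'Z_n
        = minn (pg_deg (inZp (p r.-2 * p r.-1) : 'Z_n)) (pg_deg (inZp (p r.-1) : 'Z_n)),
      pg_mindeg 'Z_n = pg_deg (inZp (p r.-1) : 'Z_n) <->
        ((totient (p r.-1))%:R >=
           ((m%:R / (totient m)%:R) - 1) * (totient (p r.-2))%:R :> rat)%R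
    & (r - 2) * totient (p r.-2) <= totient (p r.-1) ->
        pg_mindeg 'Z_n = pg_deg (inZp (p r.-1) : 'Z_n)].
Proof.
move=> r3 hpr hinc hn m.
have hg : goodp r p by split.
have hnD : n = Dj p r by rewrite hn /Dj -(big_mkord xpredT) /index_iota subn0.
have hm : m = Dj p r.-2 by rewrite /m /Dj -(big_mkord xpredT) /index_iota subn0.
have ul := iota_uniq 0 r.
have hl : all (fun j => j < r) (iota 0 r) by apply/allP => j; rewrite mem_iota.
have er : r = r.-2.+2 by lia.
have eDr : Dj p r = Dj p r.-2 * p r.-2 * p r.-1.
  by rewrite [in LHS]er !DS; congr (_ * _); congr p; lia.
have eGr : Gj r p r.-2 = p r.-2 * p r.-1.
  rewrite (@GS r p r.-2) ?(@GS r p r.-2.+1); try lia.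
  by rewrite -[r.-2.+2]er Gr muln1; congr (_ * p _); lia.
have D0 : 0 < Dj p r.-2 by apply: (prod_pos hg); apply/allP => j; rewrite mem_iota; lia.
have h2 : r.-2 < r by lia.
have h1 : r.-1 < r by lia.
have hP : 2 <= p r.-2 by have := gp_ge hg h2; lia.
have hQ : 2 <= p r.-1 by have := gp_ge hg h1; lia.
have [k hk] : exists k, n = k.+2.
  exists n.-2; rewrite hnD eDr.
  suff : 2 <= Dj p r.-2 * p r.-2 * p r.-1 by lia.
  by apply: leq_trans hQ _; rewrite leq_pmull // muln_gt0 D0; lia.
rewrite hk in hnD *; clear hn hk.
have sq : forall g d, g * d = k.+2 -> coprime g d.
  by move=> g d e; apply: (sqf hg ul hl); rewrite e hnD.
have degx : forall x : 'Z_k.+2, pg_deg x =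
    (gcdn x k.+2 * totient (k.+2 %/ gcdn x k.+2) + k.+2 %/ gcdn x k.+2
       - totient (k.+2 %/ gcdn x k.+2)).-1.
  move=> x; apply: deg_Zn => //; first by rewrite mulnC divnK ?dvdn_gcdr.
  by apply: sq; rewrite mulnC divnK ?dvdn_gcdr.
set A := Fj r p r.-2; set B := Fj r p r.-1.
have lb : forall x : 'Z_k.+2, minn A B <= pg_deg x.
  move=> x; rewrite degx; apply: Fdiv hg r3 _.
  by rewrite mulnC divnK ?dvdn_gcdr // -hnD.
have degA : pg_deg (inZp (p r.-2 * p r.-1) : 'Z_k.+2) = A.
  have lt : p r.-2 * p r.-1 < k.+2.
    have D2 : 2 <= Dj p r.-2.
      have e3 : r.-2 = (r - 3).+1 by lia.
      have h3 : (r - 3) < r by lia.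
      have D3 : 0 < Dj p (r - 3) by apply: (prod_pos hg); apply/allP => j; rewrite mem_iota; lia.
      rewrite e3 DS; have := gp_ge hg h3; nia.
    rewrite hnD eDr -mulnA; nia.
  rewrite (@deg_Zn k _ (p r.-2 * p r.-1) (Dj p r.-2)).
  - by rewrite /A Fj_tot ?eGr //; lia.
  - rewrite /= modn_small //; apply/esym/gcdn_idPl.
    by rewrite hnD eDr -mulnA dvdn_mull.
  - by rewrite hnD eDr mulnC mulnA.
  - by apply: sq; rewrite hnD eDr mulnC mulnA.
have eDr1 : Dj p r = Dj p r.-1 * p r.-1.
  by rewrite [in LHS](_ : r = r.-1.+1) ?DS //; lia.
have eGr1 : Gj r p r.-1 = p r.-1.
  by rewrite (@GS r p r.-1) // (_ : r.-1.+1 = r) ?Gr ?muln1 //; lia.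
have D1 : 0 < Dj p r.-1 by apply: (prod_pos hg); apply/allP => j; rewrite mem_iota; lia.
have degB : pg_deg (inZp (p r.-1) : 'Z_k.+2) = B.
  have lt : p r.-1 < k.+2.
    rewrite hnD eDr1; have : 2 <= Dj p r.-1.
      by rewrite eDr in eDr1; have := leq_mul (leqnn (Dj p r.-2)) hP; nia.
    nia.
  rewrite (@deg_Zn k _ (p r.-1) (Dj p r.-1)).
  - by rewrite /B Fj_tot ?eGr1 //; lia.
  - rewrite /= modn_small //; apply/esym/gcdn_idPl.
    by rewrite hnD eDr1 dvdn_mull.
  - by rewrite hnD eDr1 mulnC.
  - by apply: sq; rewrite hnD eDr1 mulnC.
have BleFr : B <= (Dj p r).-1 by rewrite -Fr; apply: Flast hg _; lia.
have hmin : pg_mindeg 'Z_k.+2 = minn A B.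
  apply/eqP; rewrite eqn_leq; apply/andP; split.
    by rewrite leq_min -degA -degB !big_minn_ub.
  apply: big_minn_lb => //.
  rewrite card_ord; apply: leq_trans (geq_minr _ _) _; rewrite hnD; lia.
have tP := totient_prime (hpr _ h2).
have tQ := totient_prime (hpr _ h1).
have tm : totient m = Tj p r.-2.
  by rewrite hm /Tj (tot_prod hg (iota_uniq 0 r.-2)) //; apply/allP => j; rewrite mem_iota; lia.
have t0 : 0 < Tj p r.-2 by apply: (Tpos hg); lia.
split.
- by rewrite hmin degA degB.
- rewrite hmin degB tm tP tQ rat_equiv // hm -BA //.
  by split => [/minn_idPr | h]; last apply/minn_idPr.
- move=> h; rewrite hmin degB; apply/minn_idPr; rewrite BA //.
  have K := Kbound hg (ltnW h2).
  rewrite tP tQ in h.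
  have e : r - 2 = r.-2 by lia.
  rewrite e in h; nia.
Qed.
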